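(* Let $\mathcal Q$ be the set of infinite arrays $q^\infty=(q(b:\cdot))_{b\ge1}$ of coefficient families satisfying the backward recursions (BR) for all $b$ and having $q(2:1)>0$. For $q^\infty\in\mathcal Q$, let $p_{q^\infty}$ be the EPPF of the final partition $(E_n)_{n\ge1}$ associated with the consistent freeze-and-merge operators defined by $q^\infty$. Equivalently, $p_{q^\infty}$ is the EPPF of the exchangeable random partition of $\mathbb N$ satisfying Möhle's recursion with coefficients $q(n:\cdot)$ for all $n$. Then the map $q^\infty\mapsto p_{q^\infty}$ is injective on $\mathcal Q$, hence a bijection onto its image.
   Context: Coefficient families. $q(1:\cdot)=\{q(1:1)\}=\{1\}$. For $b\ge2$, a coefficient family $q(b:\cdot)$ is a collection of nonnegative reals consisting of: - a number $q(b:1)$; - a number $q(b:k_1,\dots,k_r;s)$ for each multiset $\{k_1,\dots,k_r\}$ with $r\ge1$, $k_i\ge2$, $s=b-\sum k_i\ge0$; such that all these numbers sum to $1$. Backward recursions (BR). The first recursion holds for all $b\ge2$, with $l_j=\#\{i:k_i=j\}$ and the $q(b+1:\dots,2;s-1)$ term read as $0$ if $s=0$: $$\begin{aligned}q(b:k_1,\dots,k_r;s)={}&\sum_{i=1}^r\frac{(k_i+1)(l_{k_i+1}+1)}{(b+1)l_{k_i}}q(b+1:k_1,\dots,k_i+1,\dots,k_r;s)+\frac{2(l_2+1)}{b+1}q(b+1:k_1,\dots,k_r,2;s-1)\\&+\frac{s+1}{b+1}q(b+1:k_1,\dots,k_r;s+1)+\frac{q(b+1:1)+2q(b+1:2;b-1)}{b+1}q(b:k_1,\dots,k_r;s).\end{aligned}$$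 The second recursion holds for all $b\ge1$: $$q(b:1)=\frac b{b+1}q(b+1:1)+\frac{q(b+1:1)+2q(b+1:2;b-1)}{b+1}q(b:1).$$ Partitions and EPPF. A partition of a finite set is an unordered collection of nonempty pairwise disjoint blocks with union the set. A composition of $m$ is a sequence of positive integers summing to $m$, and $\mathcal C_m$ is the set of compositions of $m$. An exchangeable random partition of $\mathbb N$ is a sequence $(\Pi_n)$ of random partitions $\Pi_n$ of $[n]=\{1,\dots,n\}$, each with law invariant under permutations of $[n]$, such that $\Pi_n$ restricted to $[m]$ equals $\Pi_m$. Its EPPF $p$ on $\bigcup_m\mathcal C_m$ is defined by $\mathbb P(\Pi_m=\{A_1,\dots,A_\ell\})=p(|A_1|,\dots,|A_\ell|)$. Collisions. For integers $b\ge2$, $r\ge1$, $k_1,\dots,k_r\ge2$, $s\ge0$ with $s+\sum k_i=b$, a $(b;k_1,\dots,k_r;s)$-collision of $b$ blocks leaves $s$ blocks unchanged and divides the others into $r$ unordered groups of $k_1,\dots,k_r$ blocks, each merged into one block. Their number is $d(b;k_1,\dots,k_r;s)=\frac{b!}{s!\prod_{j=2}^b(j!)^{l_j}l_j!}$. Freeze-and-merge operators. A partially frozen partition of $[m]$ is a partition of $[m]$ whose blocks are each labeled ''active'' or ''frozen''. $\Sigma^*_m$ is the all-singletons, all-active partition of $[m]$. $\mathrm{FM}_m$ acts on a partially frozen partition with $b$ active blocks as follows. If $b=0$, it does nothing. Otherwise: - with probability $q(b:k_1,\dots,k_r;s)$, a uniformly chosen one of the $d(b;k_1,\dots,k_r;s)$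 possible $(b;k_1,\dots,k_r;s)$-collisions of the active blocks is performed, the merged blocks being active; - with probability $q(b:1)$, a uniformly chosen active block is frozen. The $\mathrm{FM}_n$-chain started from $\Sigma^*_n$ a.s. ends in an all-frozen state, whose induced (unlabeled) partition is $E_n$. *)

(* Defs.v *)
From HB Require Import structures.
From mathcomp Require Import all_boot all_order all_algebra.
Set Implicit Arguments. Unset Strict Implicit. Unset Printing Implicit Defensive.
Import Order.TTheory GRing.Theory Num.Theory.

(* valid b ks : ks is (the sorted form of) a multiset with r >= 1,
   k_i >= 2 and s = b - sum k_i >= 0. *)
Definition valid (b : nat) (ks : seq nat) : bool :=
  [&& sorted leq ks, all (fun k => 1 < k) ks, 0 < size ks & sumn ks <= b].

(* all sequences of length <= n with entries < m (duplicate-free) *)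
Fixpoint seqs (n m : nat) : seq (seq nat) :=
  if n is n'.+1 then [::] :: [seq x :: s | x <- iota 0 m, s <- seqs n' m]
  else [:: [::]].

Definition msets (b : nat) : seq (seq nat) := [seq ks <- seqs b b.+1 | valid b ks].

Definition incr (ks : seq nat) (i : nat) : seq nat :=
  sort leq (set_nth 0 ks i (nth 0 ks i).+1).

(* q1 b = q(b:1);  qc b ks = q(b:k_1,...,k_r; b - sum k_i)  (ks sorted). *)
Record qarr (R : realFieldType) := QArr {
  q1 : nat -> R;
  qc : nat -> seq nat -> R }.

Local Open Scope ring_scope.

Definition coef_family (R : realFieldType) (Q : qarr R) (b : nat) : Prop :=
  [/\ 0 <= q1 Q b, (forall ks, valid b ks -> 0 <= qc Q b ks) &
      q1 Q b + \sum_(ks <- msets b) qc Q b ks = 1].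

Definition count_eq (ks : seq nat) (j : nat) : nat := count (pred1 j) ks.

Definition BR1 (R : realFieldType) (Q : qarr R) (b : nat) (ks : seq nat) : Prop :=
  let s := (b - sumn ks)%N in
  qc Q b ks =
    \sum_(i < size ks)
       ((((nth 0 ks i).+1 * (count_eq ks (nth 0 ks i).+1).+1)%N)%:R
         / ((b.+1)%:R * (count_eq ks (nth 0 ks i))%:R))
       * qc Q b.+1 (incr ks i)
  + (2 * (count_eq ks 2).+1)%N%:R / (b.+1)%:R
       * (if s is 0 then 0 else qc Q b.+1 (2 :: ks))
  + (s.+1)%:R / (b.+1)%:R * qc Q b.+1 ks
  + (q1 Q b.+1 + 2%:R * qc Q b.+1 [:: 2]) / (b.+1)%:R * qc Q b ks.

Definition BR2 (R : realFieldType) (Q : qarr R) (b : nat) : Prop :=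
  q1 Q b = b%:R / (b.+1)%:R * q1 Q b.+1
           + (q1 Q b.+1 + 2%:R * qc Q b.+1 [:: 2]) / (b.+1)%:R * q1 Q b.

Definition inQ (R : realFieldType) (Q : qarr R) : Prop :=
  [/\ q1 Q 1 = 1,
      (forall b, (2 <= b)%N -> coef_family Q b),
      (forall b ks, (2 <= b)%N -> valid b ks -> BR1 Q b ks),
      (forall b, (1 <= b)%N -> BR2 Q b) &
      0 < q1 Q 2].

(* the (b; ks; s)-collisions of b (indexed) active blocks: set partitions of
   'I_b whose blocks of size >= 2 have sizes given by the multiset ks *)
Definition colls (b : nat) (ks : seq nat) : {set {set {set 'I_b}}} :=
  [set P : {set {set 'I_b}} | partition P [set: 'I_b] &
     sort leq (map (fun B : {set 'I_b} => #|B|)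
                   (filter (fun B : {set 'I_b} => (1 < #|B|)%N) (enum P))) == ks].

Definition merge n b (A : seq {set 'I_n}) (P : {set {set 'I_b}}) : seq {set 'I_n} :=
  map (fun B : {set 'I_b} => \bigcup_(i in B) nth set0 A (nat_of_ord i)) (enum P).

Definition rem_nth T (A : seq T) (i : nat) : seq T := take i A ++ drop i.+1 A.

Definition blocks n (A : seq {set 'I_n}) : {set {set 'I_n}} :=
  [set B : {set 'I_n} | B \in A].

(* fm_law fuel A Fz pi = probability that the FM_n-chain started from the
   partially frozen partition with active blocks A and frozen blocks Fz ends
   in the (unlabelled) partition pi. *)
Fixpoint fm_law (R : realFieldType) (n : nat) (Q : qarr R) (fuel : nat)
    (A Fz : seq {set 'I_n}) (pi : {set {set 'I_n}}) {struct fuel} : R :=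
  match fuel with
  | 0 => if blocks (A ++ Fz) == pi then 1 else 0
  | f.+1 =>
    if A is [::] then (if blocks Fz == pi then 1 else 0) else
    let b := size A in
      \sum_(ks <- msets b)
          qc Q b ks * ((\sum_(P in colls b ks) fm_law Q f (merge A P) Fz pi)
                        / (#|colls b ks|)%:R)
    + q1 Q b * ((\sum_(i < b)
                   fm_law Q f (rem_nth A i) (nth set0 A i :: Fz) pi) / b%:R)
  end.

Definition law_E (R : realFieldType) (Q : qarr R) (n : nat) (pi : {set {set 'I_n}}) : R :=
  fm_law Q n [seq [set i] | i <- enum 'I_n] [::] pi.

Definition canon (c : seq nat) : {set {set 'I_(sumn c)}} :=
  [set [set i : 'I_(sumn c) | (sumn (take j c) <= i < sumn (take j.+1 c))%N]
     | j : 'I_(size c)].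

Definition eppf (R : realFieldType) (Q : qarr R) (c : seq nat) : R :=
  law_E Q (canon c).

(* Main.v *)
Require Import Defs.
From HB Require Import structures.
From mathcomp Require Import all_boot all_order all_algebra.
Import Defs.
Set Implicit Arguments. Unset Strict Implicit. Unset Printing Implicit Defensive.
Import Order.TTheory GRing.Theory Num.Theory.

Lemma valid_sumn b ks : valid b ks -> (size ks < sumn ks)%N.
Proof.
case/and4P=> _ Hall Hsz _.
have H : forall s, all (fun k => 1 < k)%N s -> (2 * size s <= sumn s)%N.
  elim=> [|x s IH] //= /andP [Hx Hs].
  rewrite mulnS; exact: leq_add Hx (IH Hs).
have := H _ Hall; case: ks Hsz {Hall} => [|x s] //= _.
rewrite mulnS => Hle; apply: leq_trans Hle; rewrite addSn ltnS.
by rewrite add1n ltnS mul2n -addnn leq_addl.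
Qed.

Lemma valid_ge2 b ks : valid b ks -> (2 <= b)%N.
Proof.
move=> Hv; have := valid_sumn Hv; case/and4P: Hv => _ _ Hsz Hs.
move=> H; apply: leq_trans Hs; apply: leq_ltn_trans H; exact: Hsz.
Qed.

Lemma mem_seqs n m s : (size s <= n)%N -> all (fun x => x < m)%N s -> s \in seqs n m.
Proof.
elim: n s => [|n IH] [|x s] //=. all: try by rewrite inE.
rewrite ltnS => Hs /andP [Hx Hall]; rewrite inE; apply/orP; right.
apply: (allpairs_f (fun x s => x :: s)); first by rewrite mem_iota.
exact: IH.
Qed.

Lemma mem_msets b ks : (ks \in msets b) = valid b ks.
Proof.
rewrite mem_filter andb_idr // => Hv; apply: mem_seqs.
  by apply: leq_trans (ltnW (valid_sumn Hv)) _; case/and4P: Hv.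
case/and4P: Hv => _ _ _ Hs; apply/allP => x Hx; rewrite ltnS.
apply: leq_trans Hs; elim: ks Hx => [|y s IH] //=; rewrite inE.
by case/orP=> [/eqP->|/IH H]; [rewrite leq_addr|apply: leq_trans H (leq_addl _ _)].
Qed.

Lemma seq_card_split (T : finType) (s : seq {set T}) :
  (forall B, B \in s -> B != set0) ->
  (size s + sumn (map (fun B : {set T} => #|B|) (filter (fun B : {set T} => 1 < #|B|)%N s)) =
   \sum_(B <- s) (fun B0 : {set T} => #|B0|) B +
   size (map (fun B : {set T} => #|B|) (filter (fun B : {set T} => 1 < #|B|)%N s)))%N.
Proof.
elim: s => [|B s IH] Hne; first by rewrite big_nil.
have HB := Hne B (mem_head _ _).
have {}IH := IH (fun x Hx => Hne x (@mem_behead _ (B :: s) _ Hx)).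
rewrite big_cons /=; case: ifP => H1 /=.
  by rewrite addSn addnCA IH addnS addnA.
have E1 : #|B| = 1%N.
  by apply/eqP; rewrite eqn_leq leqNgt H1 card_gt0.
by rewrite E1 addSn IH add1n addSn.
Qed.

Lemma colls_card b ks (P : {set {set 'I_b}}) :
  P \in colls b ks -> (#|P| + sumn ks = b + size ks)%N.
Proof.
rewrite inE => /andP [Hp /eqP Hks].
have Hb := card_partition Hp; rewrite cardsT card_ord in Hb.
case/and3P: Hp => _ _ H0.
rewrite -Hks size_sort (perm_sumn (permEl (perm_sort _ _))) cardE.
transitivity (\sum_(A <- enum P) (fun B0 : {set 'I_b} => #|B0|) A + size (map (fun B : {set 'I_b} => #|B|) (filter (fun B : {set 'I_b} => 1 < #|B|)%N (enum P))))%N;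
  last by rewrite big_enum -Hb.
apply: seq_card_split => B; rewrite mem_enum => HB; apply/eqP => E; by rewrite -E HB in H0.
Qed.

Lemma refine_card (T : finType) (P Pi : {set {set T}}) :
  partition P [set: T] -> partition Pi [set: T] ->
  (forall B, B \in P -> exists2 C, C \in Pi & B \subset C) ->
  (#|Pi| <= #|P|)%N /\ ((#|P| <= #|Pi|)%N -> P = Pi).
Proof.
case/and3P=> /eqP covP trP P0; case/and3P=> /eqP covPi trPi Pi0 Href.
pose g (B : {set T}) := \bigcup_(x in B) pblock Pi x.
have gE : forall B C, B \in P -> C \in Pi -> B \subset C -> g B = C.
  move=> B C HB HC HBC; apply/setP => y; apply/bigcupP/idP.
    by case=> x Hx; rewrite (def_pblock trPi HC (subsetP HBC x Hx)).
  move=> Hy; have : B != set0 by apply/eqP => E; rewrite -E HB in P0.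
  case/set0Pn => x Hx; exists x => //.
  by rewrite (def_pblock trPi HC (subsetP HBC x Hx)).
have pbP : forall x, pblock P x \in P.
  by move=> x; apply: pblock_mem; rewrite covP inE.
have pbx : forall x, x \in pblock P x by move=> x; rewrite mem_pblock covP inE.
have gpb : forall C x, C \in Pi -> x \in C -> g (pblock P x) = C.
  move=> C x HC Hx; case: (Href _ (pbP x)) => C' HC' Hsub.
  rewrite (gE _ C' (pbP x) HC' Hsub).
  have HxC' := subsetP Hsub x (pbx x).
  by rewrite -(def_pblock trPi HC Hx) (def_pblock trPi HC' HxC').
have Himg : g @: P = Pi.
  apply/setP => C; apply/imsetP/idP.
    by case=> B HB ->; case: (Href _ HB) => C' HC' Hs; rewrite (gE _ _ HB HC' Hs).
  move=> HC; have : C != set0 by apply/eqP => E; rewrite -E HC in Pi0.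
  by case/set0Pn => x Hx; exists (pblock P x) => //; rewrite (gpb C x HC Hx).
have Hle : (#|Pi| <= #|P|)%N by rewrite -Himg leq_imset_card.
split=> // Hge.
have Hinj : {in P &, injective g}.
  by apply/imset_injP; rewrite Himg eqn_leq Hle Hge.
have sub : P \subset Pi.
  apply/subsetP => B HB; case: (Href _ HB) => C HC Hs.
  suff -> : B = C by [].
  apply/eqP; rewrite eqEsubset Hs; apply/subsetP => x Hx.
  have E := gpb C x HC Hx; rewrite -(gE _ _ HB HC Hs) in E.
  by rewrite -(Hinj _ _ (pbP x) HB E).
by apply/eqP; rewrite eqEcard sub.
Qed.

Definition lo (c : seq nat) (j : nat) := sumn (take j c).
Definition blk b c (j : nat) : {set 'I_b} := [set i : 'I_b | lo c j <= i < lo c j.+1]%N.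
Definition Pic b c : {set {set 'I_b}} := [set blk b c (val j) | j : 'I_(size c)].

Lemma lo_mono c j j' : (j <= j')%N -> (lo c j <= lo c j')%N.
Proof.
rewrite /lo; elim: c j j' => [|x c IH] [|j] [|j'] //= H.
by rewrite leq_add2l; apply: IH.
Qed.

Lemma lo_step c j : (j < size c)%N -> lo c j.+1 = (lo c j + nth 0 c j)%N.
Proof.
rewrite /lo; elim: c j => [|x c IH] [|j] //= H.
  by rewrite take0 /= addn0.
by rewrite IH // addnA.
Qed.

Lemma lo_size c : lo c (size c) = sumn c.
Proof. by rewrite /lo take_size. Qed.

Lemma lo_cover c i : (i < sumn c)%N -> exists2 j, (j < size c)%N & (lo c j <= i < lo c j.+1)%N.
Proof.
rewrite /lo; elim: c i => [|x c IH] i //= Hi.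
case: (ltnP i x) => Hix.
  by exists 0%N => //=; rewrite take0 /= addn0.
have : (i - x < sumn c)%N by rewrite ltn_subLR.
case/IH => j Hj /andP [H1 H2]; exists j.+1 => //=.
by rewrite -leq_subRL // -ltn_subLR // H1.
Qed.

Lemma lo_uniq c i j j' : (j < size c)%N -> (j' < size c)%N ->
  (lo c j <= i < lo c j.+1)%N -> (lo c j' <= i < lo c j'.+1)%N -> j = j'.
Proof.
move=> Hj Hj' /andP [a1 a2] /andP [b1 b2].
case: (ltngtP j j') => // H.
  have := lo_mono c H; move=> H'; have := leq_ltn_trans b1 a2.
  by rewrite ltnNge H'.
have := lo_mono c H; move=> H'; have := leq_ltn_trans a1 b2.
by rewrite ltnNge H'.
Qed.

Lemma card_interval N a h : (a <= h)%N -> (h <= N)%N ->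
  #|[set i : 'I_N | a <= i < h]%N| = (h - a)%N.
Proof.
move=> Hah HhN.
rewrite -sum1_card.
rewrite (eq_bigl (fun i : 'I_N => a <= i < h)%N); last by move=> i; rewrite inE.
rewrite -(big_mkord (fun i => a <= i < h)%N (fun _ => 1%N)).
rewrite big_mkcond /=.
rewrite (@big_cat_nat _ _ _ a 0 N) ?(leq_trans Hah HhN) //=.
rewrite (@big_cat_nat _ _ _ h a N) //=.
rewrite (@eq_big_nat _ _ _ 0 a _ (fun _ => 0%N)); last first.
  by move=> i /andP [_ Hi]; rewrite leqNgt Hi.
rewrite (@eq_big_nat _ _ _ a h _ (fun _ => 1%N)); last first.
  by move=> i ->.
rewrite (@eq_big_nat _ _ _ h N _ (fun _ => 0%N)); last first.
  by move=> i /andP [Hi _]; rewrite ltnNge Hi andbF.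
by rewrite !sum_nat_const_nat !muln0 muln1 add0n addn0.
Qed.

Lemma lo_le_sumn c j : (lo c j <= sumn c)%N.
Proof. by rewrite /lo -{2}(cat_take_drop j c) sumn_cat leq_addr. Qed.

Lemma lo_lt c j : all (fun x => 0 < x)%N c -> (j < size c)%N -> (lo c j < lo c j.+1)%N.
Proof.
move=> Hc Hj; rewrite lo_step // -{1}(addn0 (lo c j)) ltn_add2l.
by apply: (allP Hc); rewrite mem_nth.
Qed.

Section Pic.
Variables (b : nat) (c : seq nat).
Hypothesis Hb : sumn c = b.
Hypothesis Hc : all (fun x => 0 < x)%N c.

Lemma lo_ltb j : (j < size c)%N -> (lo c j < b)%N.
Proof. by move=> Hj; rewrite -Hb; apply: leq_trans (lo_lt Hc Hj) (lo_le_sumn _ _). Qed.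

Lemma blk_lo j (Hj : (j < size c)%N) : Ordinal (lo_ltb Hj) \in blk b c j.
Proof. by rewrite inE /= leqnn lo_lt. Qed.

Lemma card_blk j : (j < size c)%N -> #|blk b c j| = nth 0 c j.
Proof.
move=> Hj; rewrite card_interval ?lo_step ?addKn //; first by rewrite leq_addr.
by rewrite -lo_step // -Hb; apply: lo_le_sumn.
Qed.

Lemma blk_inj : injective (fun j : 'I_(size c) => blk b c j).
Proof.
move=> j j' /= E; apply: val_inj => /=.
have H := blk_lo (ltn_ord j); rewrite E inE /= in H.
apply: (lo_uniq (i := lo c j)) => //; first by rewrite leqnn lo_lt.
Qed.

Lemma Pic_partition : partition (Pic b c) [set: 'I_b].
Proof.
apply/and3P; split.
- apply/eqP/setP => i; rewrite inE; apply/bigcupP.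
  have : (i < sumn c)%N by rewrite Hb.
  case/lo_cover => j Hj Hi; exists (blk b c j); last by rewrite inE.
  by apply/imsetP; exists (Ordinal Hj).
- apply/trivIsetP => B1 B2 /imsetP [j1 _ ->] /imsetP [j2 _ ->] Hne.
  rewrite -setI_eq0; apply/eqP/setP => i; rewrite !inE.
  apply/negbTE/andP => [[H1 H2]]; move/eqP: Hne; apply.
  by have E := lo_uniq (ltn_ord j1) (ltn_ord j2) H1 H2; rewrite /= E.
- apply/negP => /imsetP [j _ E]; have := blk_lo (ltn_ord j).
  by rewrite -E inE.
Qed.

Lemma Pic_type :
  sort leq (map (fun B : {set 'I_b} => #|B|) (filter (fun B : {set 'I_b} => 1 < #|B|)%N (enum (Pic b c)))) =
  sort leq [seq x <- c | (1 < x)%N].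
Proof.
apply/(perm_sortP leq_total leq_trans anti_leq).
have Hp : perm_eq (enum (Pic b c)) [seq blk b c (val j) | j <- enum 'I_(size c)].
  apply: uniq_perm; first exact: enum_uniq.
    by rewrite map_inj_uniq ?enum_uniq //; apply: blk_inj.
  move=> B; rewrite mem_enum; apply/imsetP/mapP.
    by case=> j _ ->; exists j; rewrite ?mem_enum.
  by case=> j _ ->; exists j.
have Ec : c = map (fun B : {set 'I_b} => #|B|) [seq blk b c (val j) | j <- enum 'I_(size c)].
  rewrite -map_comp (eq_map (g := fun j : 'I_(size c) => nth 0 c j)); last first.
    by move=> j /=; rewrite card_blk.
  by rewrite (map_comp (nth 0 c) val) val_enum_ord -/(mkseq _ _) mkseq_nth.
rewrite -filter_map; apply: perm_trans (perm_filter _ (perm_map _ Hp)) _.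
by rewrite -Ec.
Qed.

End Pic.

Local Open Scope ring_scope.

Section FM.
Variables (R : realFieldType) (n : nat).

Lemma fm_unfold (Q : qarr R) f (A Fz : seq {set 'I_n}) pi : (0 < f)%N -> A != [::] ->
  fm_law Q f A Fz pi =
   \sum_(ks <- msets (size A)) qc Q (size A) ks *
       ((\sum_(P in colls (size A) ks) fm_law Q f.-1 (merge A P) Fz pi)
          / (#|colls (size A) ks|)%:R)
   + q1 Q (size A) * ((\sum_(i < size A)
         fm_law Q f.-1 (rem_nth A i) (nth set0 A i :: Fz) pi) / (size A)%:R).
Proof. by case: f => // f; case: A. Qed.

Lemma q1_ge0 (Q : qarr R) m : inQ Q -> (1 <= m)%N -> 0 <= q1 Q m.
Proof.
case=> H1 Hcf _ _ _; case: m => // [[|m]] _; first by rewrite H1.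
by case: (Hcf m.+2 isT).
Qed.

Lemma qc_ge0 (Q : qarr R) m ks : inQ Q -> ks \in msets m -> 0 <= qc Q m ks.
Proof.
case=> _ Hcf _ _ _; rewrite mem_msets => Hv.
by case: (Hcf m (valid_ge2 Hv)) => _ H _; apply: H.
Qed.

Lemma fm_ge0 (Q : qarr R) f (A Fz : seq {set 'I_n}) pi : inQ Q -> 0 <= fm_law Q f A Fz pi.
Proof.
move=> HQ; elim: f A Fz => [|f IH] A Fz; first by rewrite /=; case: ifP.
case: A => [|a A]; first by rewrite /=; case: ifP.
rewrite fm_unfold //=; apply: addr_ge0.
  rewrite big_seq; apply: sumr_ge0 => ks Hks; apply: mulr_ge0; first exact: qc_ge0.
  by apply: divr_ge0 => //; apply: sumr_ge0 => P _; apply: IH.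
apply: mulr_ge0; first exact: q1_ge0.
by apply: divr_ge0 => //; apply: sumr_ge0 => i _; apply: IH.
Qed.


Definition agree (Q Q' : qarr R) m :=
  q1 Q m = q1 Q' m /\ (forall ks, valid m ks -> qc Q m ks = qc Q' m ks).

Lemma size_merge m (A : seq {set 'I_n}) (P : {set {set 'I_m}}) :
  size (Defs.merge A P) = #|P|.
Proof. by rewrite size_map -cardE. Qed.

Lemma colls_lt b ks (P : {set {set 'I_b}}) : P \in colls b ks -> valid b ks -> (#|P| < b)%N.
Proof.
move=> HP Hv; have H := colls_card HP; have H2 := valid_sumn Hv.
by rewrite -(ltn_add2r (sumn ks)) H ltn_add2l.
Qed.

Lemma size_rem_nth (T : Type) (A : seq T) i : (i < size A)%N -> size (rem_nth A i) = (size A).-1.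
Proof.
rewrite /rem_nth size_cat size_take size_drop => Hi; rewrite Hi.
by case: (size A) Hi => // s' Hi; rewrite subSS /= subnKC.
Qed.

Lemma mem_rem_nth (T : eqType) (A Fz : seq T) i x0 x : (i < size A)%N ->
  (x \in rem_nth A i ++ nth x0 A i :: Fz) = (x \in A ++ Fz).
Proof.
move=> Hi; rewrite /rem_nth -[in RHS](cat_take_drop i A) (drop_nth x0 Hi) !mem_cat !inE.
by case: (x \in take i A); case: (x == _); case: (x \in drop _ _); case: (x \in Fz).
Qed.

Lemma blocks_rem (A Fz : seq {set 'I_n}) i : (i < size A)%N ->
  blocks (rem_nth A i ++ nth set0 A i :: Fz) = blocks (A ++ Fz).
Proof. by move=> Hi; apply/setP => X; rewrite !inE mem_rem_nth. Qed.

Lemma fm_agree (Q Q' : qarr R) N f (A Fz : seq {set 'I_n}) pi :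
  (forall m, (1 <= m <= N)%N -> agree Q Q' m) -> (size A <= N)%N ->
  fm_law Q f A Fz pi = fm_law Q' f A Fz pi.
Proof.
move=> Hag; elim: f A Fz => [|f IH] A Fz //.
case: A => [|a A] Hs //.
rewrite !fm_unfold //=.
have [h1 h2] := Hag (size (a :: A)) Hs.
rewrite h1; congr (_ + _ * _).
  apply: eq_big_seq => ks Hks; rewrite h2 -?mem_msets //.
  congr (_ * (_ / _)); apply: eq_bigr => P HP; apply: IH.
  rewrite size_merge; apply: leq_trans Hs; apply: ltnW; apply: colls_lt HP _.
  by rewrite -mem_msets.
congr (_ / _); apply: eq_bigr => i _; apply: IH.
by rewrite size_rem_nth //; apply: leq_trans Hs.
Qed.

Lemma fm_support (Q : qarr R) f (A Fz : seq {set 'I_n}) (pi : {set {set 'I_n}}) x :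
  x \in A ++ Fz -> (forall y, y \in pi -> ~~ (x \subset y)) -> fm_law Q f A Fz pi = 0.
Proof.
elim: f A Fz x => [|f IH] A Fz x Hx Hn.
  rewrite /=; case: ifP => // /eqP E.
  by have := Hn x; rewrite -E inE Hx subxx => /(_ isT).
case: A Hx => [|a A] Hx.
  rewrite /=; case: ifP => // /eqP E.
  by have := Hn x; rewrite -E inE Hx subxx => /(_ isT).
rewrite fm_unfold //; set A' := a :: A.
rewrite big1_seq ?add0r; last first.
  move=> ks /andP [_ Hks]; rewrite big1 ?mul0r ?mulr0 // => P HP.
  have Hpart : partition P [set: 'I_(size A')] by move: HP; rewrite inE => /andP [].
  move: Hx; rewrite mem_cat => /orP [HxA|HxF].
    have Hi : (index x A' < size A')%N by rewrite index_mem.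
    have : Ordinal Hi \in cover P by case/and3P: Hpart => /eqP -> _ _; rewrite inE.
    case/bigcupP => B HB HiB.
    pose X := \bigcup_(j in B) nth set0 A' (nat_of_ord j).
    apply: (IH _ _ X).
      rewrite mem_cat; apply/orP; left; apply/mapP; exists B => //; by rewrite mem_enum.
    have Hsub : x \subset X.
      by rewrite /X; have := @bigcup_sup _ _ (Ordinal Hi) (mem B) (fun j : 'I_(size A') => nth set0 A' j) HiB; rewrite /= nth_index.
    by move=> y Hy; apply: contra (Hn y Hy) => HX; apply: subset_trans Hsub HX.
  by apply: (IH _ _ x) => //; rewrite mem_cat HxF orbT.
rewrite big1 ?mul0r ?mulr0 // => i _.
by apply: (IH _ _ x) => //; rewrite mem_rem_nth.
Qed.

Lemma sum_ord_gt0 m (F : 'I_m -> R) : (0 < m)%N -> (forall i, 0 < F i) -> 0 < \sum_(i < m) F i.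
Proof.
case: m F => // m F _ HF; rewrite big_ord_recl; apply: ltr_pwDl => //.
by apply: sumr_ge0 => i _; apply: ltW.
Qed.

Lemma fm_pos (Q : qarr R) f (A Fz : seq {set 'I_n}) pi : inQ Q ->
  (forall m, (1 <= m <= size A)%N -> 0 < q1 Q m) -> pi = blocks (A ++ Fz) ->
  0 < fm_law Q f A Fz pi.
Proof.
move=> HQ; elim: f A Fz => [|f IH] A Fz Hq Hpi.
  by rewrite /= -Hpi eqxx.
case: A Hq Hpi => [|a A] Hq Hpi; first by rewrite /= -Hpi eqxx.
rewrite fm_unfold //; set A' := a :: A.
apply: ltr_pwDr.
  apply: mulr_gt0; first by apply: Hq; rewrite leqnn.
  apply: divr_gt0 => //; apply: sum_ord_gt0 => // i.
  apply: IH; last by rewrite blocks_rem.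
  move=> m /andP [H1 H2]; apply: Hq; rewrite H1 /=; apply: leq_trans H2 _.
  by rewrite size_rem_nth // leq_pred.
rewrite big_seq; apply: sumr_ge0 => ks Hks; apply: mulr_ge0; first exact: qc_ge0.
by apply: divr_ge0 => //; apply: sumr_ge0 => P _; apply: fm_ge0.
Qed.

End FM.

Lemma le_sum_mem (R : realFieldType) (T : eqType) (s : seq T) x (F : T -> R) :
  (forall y, y \in s -> 0 <= F y) -> x \in s -> F x <= \sum_(y <- s) F y.
Proof.
elim: s => [|y s IH] //= Hnn; rewrite inE big_cons => /orP [/eqP ->|Hx].
  by rewrite lerDl; rewrite big_seq; apply: sumr_ge0 => z Hz; apply: Hnn; rewrite inE Hz orbT.
apply: le_trans (IH (fun z Hz => Hnn z (mem_behead (s := y :: s) Hz)) Hx) _.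
by rewrite lerDr; apply: Hnn; rewrite mem_head.
Qed.

Lemma q1_pos (R : realFieldType) (Q : qarr R) m : inQ Q -> (1 <= m)%N -> 0 < q1 Q m.
Proof.
move=> HQ; case: (HQ) => H1 Hcf _ Hbr2 H2.
elim: m => // [[|[|m]]] IH _; first by rewrite H1 ltr01.
  exact: H2.
have Hm := IH isT.
case: (ltrP 0 (q1 Q m.+3)) => // Hle.
have E0 : q1 Q m.+3 = 0 by apply/eqP; rewrite eq_le Hle q1_ge0.
have Hc2 : qc Q m.+3 [:: 2%N] <= 1.
  case: (Hcf m.+3 isT) => Hq1 Hqc Hsum.
  have Hmem : [:: 2%N] \in msets m.+3 by rewrite mem_msets.
  apply: le_trans (le_sum_mem (F := qc Q m.+3) _ Hmem) _.
    by move=> y; rewrite mem_msets; apply: Hqc.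
  by rewrite -Hsum lerDr.
have Hc : (2%:R * qc Q m.+3 [:: 2%N]) / (m.+3)%:R < 1.
  rewrite ltr_pdivrMr ?ltr0n // mul1r; apply: le_lt_trans (_ : 2%:R * 1 < _).
    by rewrite ler_pM2l ?ltr0n.
  by rewrite mulr1 ltr_nat.
have := Hbr2 m.+2 isT; rewrite /BR2 E0 mulr0 add0r add0r => E.
have : q1 Q m.+2 < q1 Q m.+2.
  by rewrite {1}E -{2}(mul1r (q1 Q m.+2)) ltr_pM2r.
by rewrite ltxx.
Qed.

Notation A0 n := [seq [set i] | i <- enum 'I_n].

Lemma size_A0 n : size (A0 n) = n.
Proof. by rewrite size_map size_enum_ord. Qed.

Lemma nth_A0 n i (x : 'I_n) : (i < n)%N -> (x \in nth set0 (A0 n) i) = (val x == i).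
Proof.
move=> Hi; rewrite (nth_map (Ordinal Hi)) ?size_enum_ord // inE.
by rewrite -val_eqE /= nth_enum_ord.
Qed.

Lemma ltn_A0 n (k : 'I_(size (A0 n))) : (k < n)%N.
Proof. by case: k => /= k; rewrite size_A0. Qed.

Lemma mem_U n (B : {set 'I_(size (A0 n))}) (x : 'I_n) :
  (x \in \bigcup_(k in B) nth set0 (A0 n) k) = [exists k in B, val k == val x].
Proof.
apply/bigcupP/existsP.
  case=> k Hk; rewrite nth_A0; last exact: ltn_A0.
  by move/eqP=> E; exists k; rewrite Hk E eqxx.
case=> k /andP [Hk /eqP E]; exists k => //.
by rewrite nth_A0 ?E // -E ltn_A0.
Qed.

Lemma canon_blocks c : all (fun x => 0 < x)%N c ->
  canon c = blocks (Defs.merge (A0 (sumn c)) (Pic (size (A0 (sumn c))) c) ++ [::]).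
Proof.
move=> Hc; set N := sumn c; set A := A0 N.
have Hb : sumn c = size A by rewrite size_A0.
have Ublk : forall j, \bigcup_(k in blk (size A) c j) nth set0 A k = blk N c j.
  move=> j; apply/setP => x; rewrite mem_U inE; apply/existsP/idP.
    by case=> k /andP [Hk /eqP <-]; rewrite inE in Hk.
  move=> Hx; have Hxb : (val x < size A)%N by rewrite /A size_A0; exact: ltn_ord.
  by exists (Ordinal Hxb); rewrite inE /= Hx eqxx.
apply/setP => Y; rewrite inE cats0; apply/imsetP/mapP.
  case=> j _ ->; exists (blk (size A) c j); last by rewrite Ublk.
  by rewrite mem_enum; apply/imsetP; exists j.
case=> B; rewrite mem_enum => /imsetP [j _ ->] ->.
by exists j; rewrite // Ublk.
Qed.

Lemma canon_nseq n : canon (nseq n 1%N) = blocks (A0 (sumn (nseq n 1%N)) ++ [::]).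
Proof.
have Hs : sumn (nseq n 1%N) = n by rewrite sumn_nseq mul1n.
have Hlo : forall j, (j <= n)%N -> sumn (take j (nseq n 1%N)) = j.
  by move=> j Hj; rewrite take_nseq // sumn_nseq mul1n.
apply/setP => Y; rewrite inE cats0; apply/imsetP/mapP.
  case=> j _ ->.
  have Hjn : (val j < n)%N by case: j => /= j; rewrite size_nseq.
  have Hj : (val j < sumn (nseq n 1%N))%N by rewrite Hs.
  exists (Ordinal Hj); first by rewrite mem_enum.
  apply/setP => x; rewrite !inE -val_eqE /= (Hlo _ (ltnW Hjn)) (Hlo _ Hjn).
  by rewrite ltnS andbC -eqn_leq.
case=> x _ ->.
have Hxn : (val x < n)%N by case: x => /= x; rewrite Hs.
have Hx : (val x < size (nseq n 1%N))%N by rewrite size_nseq.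
exists (Ordinal Hx) => //; apply/setP => y.
rewrite !inE -val_eqE /= (Hlo _ (ltnW Hxn)) (Hlo _ Hxn).
by rewrite ltnS andbC -eqn_leq.
Qed.

Lemma refine_of_nz (R : realFieldType) (Q : qarr R) f c
  (P : {set {set 'I_(size (A0 (sumn c)))}}) :
  fm_law Q f (Defs.merge (A0 (sumn c)) P) [::] (canon c) != 0 ->
  forall B, B \in P -> exists2 C, C \in Pic (size (A0 (sumn c))) c & B \subset C.
Proof.
move=> Hnz B HB; set A := A0 (sumn c).
set X := \bigcup_(k in B) nth set0 A k.
case: (boolP [exists y in canon c, X \subset y]) => [/existsP [y /andP [Hy HXy]] | Hno].
  case/imsetP: Hy => j _ Ey; exists (blk (size A) c j).
    by apply/imsetP; exists j.
  apply/subsetP => k Hk.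
  have Hkn : (val k < sumn c)%N by apply: ltn_A0.
  have : Ordinal Hkn \in X by rewrite mem_U; apply/existsP; exists k; rewrite Hk /=.
  by move/(subsetP HXy); rewrite Ey !inE.
exfalso; move/eqP: Hnz; apply; apply: (@fm_support _ _ Q f _ _ _ X).
  by rewrite cats0; apply/mapP; exists B; rewrite ?mem_enum.
move=> y Hy; apply/negP => H; move/negP: Hno; apply.
by apply/existsP; exists y; rewrite Hy H.
Qed.

Section Main.
Variables (R : realFieldType) (Q Q' : qarr R).
Hypotheses (HQ : inQ Q) (HQ' : inQ Q').
Hypothesis Heppf : forall c, all (fun x => 0 < x)%N c -> eppf Q c = eppf Q' c.

Definition Xc c ks :=
  (\sum_(P in colls (size (A0 (sumn c))) ks)
      fm_law Q (sumn c).-1 (Defs.merge (A0 (sumn c)) P) [::] (canon c))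
   / (#|colls (size (A0 (sumn c))) ks|)%:R.
Definition Tc c :=
  (\sum_(i < size (A0 (sumn c)))
     fm_law Q (sumn c).-1 (rem_nth (A0 (sumn c)) i) [:: nth set0 (A0 (sumn c)) i] (canon c))
   / (size (A0 (sumn c)))%:R.

Lemma key c : all (fun x => 0 < x)%N c -> (0 < sumn c)%N ->
  (forall m, (1 <= m < sumn c)%N -> agree Q Q' m) ->
  \sum_(ks <- msets (size (A0 (sumn c))))
     (qc Q (size (A0 (sumn c))) ks - qc Q' (size (A0 (sumn c))) ks) * Xc c ks
  + (q1 Q (size (A0 (sumn c))) - q1 Q' (size (A0 (sumn c)))) * Tc c = 0.
Proof.
move=> Hc Hpos Hag.
have Hne : A0 (sumn c) != [::] by rewrite -size_eq0 size_A0 -lt0n.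
have Hag' : forall m, (1 <= m <= (sumn c).-1)%N -> agree Q Q' m.
  by move=> m /andP [H1 H2]; apply: Hag; rewrite H1 /= -(prednK Hpos) ltnS.
have Hsz : (size (A0 (sumn c))).-1 = (sumn c).-1 by rewrite size_A0.
have L : eppf Q c = \sum_(ks <- msets (size (A0 (sumn c)))) qc Q (size (A0 (sumn c))) ks * Xc c ks
                   + q1 Q (size (A0 (sumn c))) * Tc c.
  by rewrite /eppf /law_E fm_unfold.
have L' : eppf Q' c = \sum_(ks <- msets (size (A0 (sumn c)))) qc Q' (size (A0 (sumn c))) ks * Xc c ks
                   + q1 Q' (size (A0 (sumn c))) * Tc c.
  rewrite /eppf /law_E fm_unfold // /Xc /Tc; congr (_ + _ * (_ / _)).
    apply: eq_big_seq => ks Hks; congr (_ * (_ / _)); apply: eq_bigr => P HP.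
    apply: esym; apply: (fm_agree (N := (sumn c).-1)) => //.
    rewrite size_merge -Hsz -ltnS prednK ?size_A0 //.
    by apply: colls_lt HP _; rewrite -mem_msets.
  apply: eq_bigr => i _; apply: esym; apply: (fm_agree (N := (sumn c).-1)) => //.
  by rewrite size_rem_nth // Hsz.
rewrite (eq_bigr (fun ks => qc Q (size (A0 (sumn c))) ks * Xc c ks - qc Q' (size (A0 (sumn c))) ks * Xc c ks)); last first.
  by move=> ks _; rewrite mulrBl.
by rewrite sumrB mulrBl addrACA -L -opprD -L' Heppf // subrr.
Qed.


Lemma big_of_colls b ks (P : {set {set 'I_b}}) :
  P \in colls b ks -> valid b ks -> exists2 B, B \in P & (1 < #|B|)%N.
Proof.
rewrite inE => /andP [_ /eqP Hks] Hv.
case/and4P: Hv => _ _ Hsz _; move: Hsz.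
rewrite -Hks size_sort size_map size_filter -has_count => /hasP [B HB H].
by exists B => //; rewrite -mem_enum.
Qed.

Lemma sum_only (T : eqType) (s : seq T) a (F : T -> R) :
  (forall x, x \in s -> x != a -> F x = 0) -> \sum_(x <- s) F x = (count_mem a s)%:R * F a.
Proof.
elim: s => [|x s IH] H; first by rewrite big_nil mul0r.
rewrite big_cons IH; last by move=> y Hy; apply: H; rewrite inE Hy orbT.
rewrite /=; case: (eqVneq x a) => [->|Hne].
  have -> : (true + count_mem a s = (count_mem a s).+1)%N by [].
  by rewrite mulrSr mulrDl mul1r addrC.
have -> : (false + count_mem a s = count_mem a s)%N by [].
by rewrite H ?mem_head // add0r.
Qed.

Lemma step1 n : (2 <= n)%N -> (forall m, (1 <= m < n)%N -> agree Q Q' m) -> q1 Q n = q1 Q' n.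
Proof.
move=> Hn Hlow; set c := nseq n 1%N.
have Hc : all (fun x => 0 < x)%N c by apply/allP => x; rewrite mem_nseq => /andP [_ /eqP ->].
have Hs : sumn c = n by rewrite sumn_nseq mul1n.
have Hb : sumn c = size (A0 (sumn c)) by rewrite size_A0.
have Hpos : (0 < sumn c)%N by rewrite Hs; apply: leq_trans Hn.
have Hag : forall m, (1 <= m < sumn c)%N -> agree Q Q' m by rewrite Hs.
have Hk := key Hc Hpos Hag.
rewrite big1_seq ?add0r in Hk; last first.
  move=> ks /andP [_ Hks]; rewrite /Xc big1 ?mul0r ?mulr0 // => P HP.
  apply/eqP/negPn/negP => Hnz.
  have Href := refine_of_nz Hnz.
  case: (big_of_colls HP _); first by rewrite -mem_msets.
  move=> B HB Hbig; case: (Href B HB) => C /imsetP [j _ ->] Hsub.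
  have := subset_leq_card Hsub; rewrite (card_blk Hb (ltn_ord j)).
  have Hj : (val j < n)%N by case: j {Hsub} => /= j; rewrite size_nseq.
  by rewrite nth_nseq Hj leqNgt Hbig.
have HT : 0 < Tc c.
  apply: divr_gt0; last by rewrite ltr0n size_A0 Hs; apply: leq_trans Hn.
  apply: sum_ord_gt0; first by rewrite size_A0 Hs; apply: leq_trans Hn.
  move=> i; apply: fm_pos => //.
    by move=> m /andP [H1 _]; apply: q1_pos.
  by rewrite blocks_rem // canon_nseq.
move/eqP: Hk; rewrite mulf_eq0 (gt_eqF HT) orbF subr_eq0 size_A0 Hs.
by move/eqP.
Qed.

Lemma stepk n ks : (2 <= n)%N -> (forall m, (1 <= m < n)%N -> agree Q Q' m) ->
  q1 Q n = q1 Q' n ->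
  (forall ks', valid n ks' -> (sumn ks' - size ks' < sumn ks - size ks)%N ->
      qc Q n ks' = qc Q' n ks') ->
  valid n ks -> qc Q n ks = qc Q' n ks.
Proof.
move=> Hn Hlow Hq1 IH Hv.
have Hv' := Hv; case/and4P: Hv' => Hsort Hall Hsz Hsum.
set c := ks ++ nseq (n - sumn ks) 1%N.
have Hc : all (fun x => 0 < x)%N c.
  rewrite all_cat; apply/andP; split.
    by apply: sub_all Hall => x; apply: ltnW.
  by apply/allP => x; rewrite mem_nseq => /andP [_ /eqP ->].
have Hs : sumn c = n by rewrite sumn_cat sumn_nseq mul1n subnKC.
have Hb : sumn c = size (A0 (sumn c)) by rewrite size_A0.
have Eb : size (A0 (sumn c)) = n by rewrite size_A0.
have Hpos : (0 < sumn c)%N by rewrite Hs; apply: leq_trans Hn.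
have Hag : forall m, (1 <= m < sumn c)%N -> agree Q Q' m by rewrite Hs.
have Hk := key Hc Hpos Hag.
rewrite Eb Hq1 subrr mul0r addr0 -Eb in Hk.
set b := size (A0 (sumn c)) in Hk Hb Eb.
have HPp := Pic_partition Hb Hc.
have HPc : Pic b c \in colls b ks.
  rewrite inE HPp /= Pic_type // filter_cat filter_nseq /=.
  by rewrite /= cats0 (all_filterP Hall) (sorted_sort leq_trans Hsort).
have Hvb : valid b ks by rewrite Eb.
rewrite (sum_only (a := ks)) in Hk; last first.
  move=> ks' Hks' Hne.
  have Hv2 : valid b ks' by rewrite -mem_msets.
  case: (ltnP (sumn ks' - size ks') (sumn ks - size ks)) => Hlt.
    by rewrite Eb IH ?subrr ?mul0r // -Eb.
  rewrite /Xc big1 ?mul0r ?mulr0 // => P HP.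
  apply/eqP/negPn/negP => Hnz.
  have Href := refine_of_nz Hnz.
  have HPpart : partition P [set: 'I_b] by move: HP; rewrite inE => /andP [].
  case: (refine_card HPpart HPp Href) => Hle Heq.
  case: (leqP #|P| #|Pic b c|) => Hc2.
    have E := Heq Hc2; rewrite E in HP.
    move: HP HPc; rewrite !inE => /andP [_ /eqP E1] /andP [_ /eqP E2].
    by move/eqP: Hne; apply; rewrite -E1 E2.
  have e1 := colls_card HP; have e2 := colls_card HPc.
  have d1 : (#|P| + (sumn ks' - size ks') = b)%N.
    by rewrite addnBA ?e1 ?addnK //; apply: ltnW; apply: valid_sumn Hv2.
  have d2 : (#|Pic b c| + (sumn ks - size ks) = b)%N.
    by rewrite addnBA ?e2 ?addnK //; apply: ltnW; apply: valid_sumn Hvb.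
  have : (sumn ks' - size ks' < sumn ks - size ks)%N.
    by rewrite -(ltn_add2l #|P|) d1 -d2 ltn_add2r.
  by rewrite ltnNge Hlt.
have HX : 0 < Xc c ks.
  apply: divr_gt0.
    rewrite (bigD1 (Pic b c)) //=; apply: ltr_pwDl.
      apply: fm_pos => //; first by move=> m /andP [H1 _]; apply: q1_pos.
      exact: canon_blocks.
    by apply: sumr_ge0 => P _; apply: fm_ge0.
  by rewrite ltr0n card_gt0; apply/set0Pn; exists (Pic b c).
have Hcnt : (0 < count_mem ks (msets b))%N by rewrite -has_count has_pred1 mem_msets.
move/eqP: Hk; rewrite mulf_eq0 pnatr_eq0 eqn0Ngt Hcnt /= mulf_eq0 (gt_eqF HX) orbF.
by rewrite subr_eq0 Eb => /eqP.
Qed.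

Lemma level n : (1 <= n)%N -> (forall m, (1 <= m < n)%N -> agree Q Q' m) -> agree Q Q' n.
Proof.
case: n => // [[|n]] _ Hlow.
  split; first by case: HQ => ->; case: HQ' => ->.
  by move=> ks /valid_ge2.
have Hq := step1 (isT : (2 <= n.+2)%N) Hlow.
split=> // ks.
suff H : forall k ks, valid n.+2 ks -> (sumn ks - size ks < k)%N -> qc Q n.+2 ks = qc Q' n.+2 ks.
  by move=> Hv; apply: (H (sumn ks - size ks).+1).
elim=> // k IHk ks' Hv Hk.
apply: stepk => // ks'' Hv'' Hlt; apply: IHk => //.
by apply: leq_trans Hlt _; rewrite -ltnS.
Qed.

End Main.

Local Close Scope ring_scope.
Unset Implicit Arguments.

Theorem lemma6p3 (R : realFieldType) (Q Q' : qarr R) :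
  inQ Q -> inQ Q' ->
  (forall c : seq nat, all (fun x => 0 < x)%N c -> eppf Q c = eppf Q' c) ->
  forall b : nat, (1 <= b)%N ->
    q1 Q b = q1 Q' b /\ (forall ks, valid b ks -> qc Q b ks = qc Q' b ks).
Proof.
move=> HQ HQ' He b; elim/ltn_ind: b => b IH Hb.
apply: (level HQ HQ' He Hb) => m /andP [H1 H2].
exact: IH.
Qed.
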